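(* Let $S:=K_T(\mathrm{pt})[X_1^{(1)},Y_1^{(1)},e_1(X^{(2)}),e_2(X^{(2)}),Y_1^{(2)}]$ be a polynomial ring in five independent indeterminates over $K_T(\mathrm{pt})=\mathbb Z[T_1^{\pm1},T_2^{\pm1},T_3^{\pm1}]$, and write $e_i(T)$ for the elementary symmetric polynomials in $T_1,T_2,T_3$. Let $I_q^{\mathrm{poly}}\subset S[q_1,q_2]$ be the ideal generated by $X_1^{(1)}+Y_1^{(1)}-e_1(X^{(2)})$, $X_1^{(1)}Y_1^{(1)}-(1-q_1)e_2(X^{(2)})$, $(1-q_2)\big(e_1(X^{(2)})+Y_1^{(2)}-e_1(T)\big)$, $\big(e_1(X^{(2)})-q_2X_1^{(1)}\big)Y_1^{(2)}-(1-q_2)\big(e_2(T)-e_2(X^{(2)})\big)$, $e_2(X^{(2)})Y_1^{(2)}-(1-q_2)e_3(T)$, and let $I_q\subset S[\![q_1,q_2]\!]$ be the ideal generated by the same five elements. Then the natural ring homomorphism $\Phi^{\mathrm{poly}}:S[q_1,q_2]/I_q^{\mathrm{poly}}\to S[\![q_1,q_2]\!]/I_q$ is not injective: the class of $e_1(X^{(2)})+Y_1^{(2)}-e_1(T)$ is nonzero in $S[q_1,q_2]/I_q^{\mathrm{poly}}$ but lies in the kernel of $\Phi^{\mathrm{poly}}$. *)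

(* Defs.v *)
From HB Require Import structures.
From mathcomp Require Import all_boot all_algebra fraction.
From mathcomp Require Import mpoly.
From mathcomp Require Import boolp.

Set Implicit Arguments.
Unset Strict Implicit.
Unset Printing Implicit Defensive.

Import GRing.Theory.
Local Open Scope ring_scope.

(* K_T(pt) = Z[T1^{+-1}, T2^{+-1}, T3^{+-1}], realised as the subring  *)
(* of the fraction field of Z[T1,T2,T3] consisting of the elements     *)
(* p / (T1 T2 T3)^k with p a polynomial.                               *)

Definition ZT := {mpoly int[3]}.
Definition KFrac := {fraction ZT}.
Local Notation "x %:F" := (@FracField.tofrac ZT x).

Definition Tmon : ZT := 'X_(0 : 'I_3) * 'X_(1 : 'I_3) * 'X_(2 : 'I_3).

Definition laurent_pred : pred KFrac :=
  fun x => `[< exists k : nat, exists p : ZT, x * (Tmon ^+ k)%:F = p%:F >].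

Lemma laurent_subring_closed : subring_closed laurent_pred.
Proof.
split.
- apply/asboolP; exists 0%N, 1; by rewrite expr0 tofrac1 mulr1.
- move=> x y /asboolP [kx [px Hx]] /asboolP [ky [py Hy]].
  apply/asboolP; exists (kx + ky)%N, (px * Tmon ^+ ky - py * Tmon ^+ kx).
  rewrite tofracB !tofracM -Hx -Hy exprD tofracM.
  by rewrite mulrBl; congr (_ - _); rewrite -!mulrA; congr (_ * _);
     rewrite mulrC // ; rewrite [X in _ = X]mulrC.
- move=> x y /asboolP [kx [px Hx]] /asboolP [ky [py Hy]].
  apply/asboolP; exists (kx + ky)%N, (px * py).
  rewrite tofracM -Hx -Hy exprD tofracM.
  by rewrite -!mulrA; congr (_ * _); rewrite mulrC -mulrA; congr (_ * _);
     rewrite mulrC.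
Qed.

Record KT := KT_mk { kt_val : KFrac; kt_valP : kt_val \in laurent_pred }.

HB.instance Definition _ := [isSub for kt_val].
HB.instance Definition _ := [Choice of KT by <:].
HB.instance Definition _ :=
  GRing.SubChoice_isSubComNzRing.Build KFrac laurent_pred KT laurent_subring_closed.

Lemma T_in_laurent (i : 'I_3) : ('X_i : ZT)%:F \in laurent_pred.
Proof. by apply/asboolP; exists 0%N, 'X_i; rewrite expr0 tofrac1 mulr1. Qed.

Definition T (i : 'I_3) : KT := KT_mk (T_in_laurent i).

Definition e1T : KT := T 0 + T 1 + T 2.
Definition e2T : KT := T 0 * T 1 + T 0 * T 2 + T 1 * T 2.
Definition e3T : KT := T 0 * T 1 * T 2.

Definition S := {mpoly KT[5]}.
Definition X11 : S := 'X_(0 : 'I_5).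
Definition Y11 : S := 'X_(1 : 'I_5).
Definition e1X2 : S := 'X_(2 : 'I_5).
Definition e2X2 : S := 'X_(3 : 'I_5).
Definition Y12 : S := 'X_(4 : 'I_5).

Definition Sq := {mpoly S[2]}.
Definition q1 : Sq := 'X_(0 : 'I_2).
Definition q2 : Sq := 'X_(1 : 'I_2).
Definition cS (s : S) : Sq := s%:MP.
Definition cK (k : KT) : Sq := (k%:MP : S)%:MP.

Definition gens (i : 'I_5) : Sq :=
  match val i with
  | 0 => cS X11 + cS Y11 - cS e1X2
  | 1 => cS X11 * cS Y11 - (1 - q1) * cS e2X2
  | 2 => (1 - q2) * (cS e1X2 + cS Y12 - cK e1T)
  | 3 => (cS e1X2 - q2 * cS X11) * cS Y12 - (1 - q2) * (cK e2T - cS e2X2)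
  | _ => cS e2X2 * cS Y12 - (1 - q2) * cK e3T
  end.

Definition fq : Sq := cS e1X2 + cS Y12 - cK e1T.

Definition in_Ipoly (f : Sq) : Prop :=
  exists g : 'I_5 -> Sq, f = \sum_(i < 5) g i * gens i.

(* Formal power series ring S[[q1,q2]]: a series is its coefficient   *)
(* family (i, j) |-> coefficient of q1^i q2^j, with the Cauchy product.*)
Definition pseries (R : nzRingType) := nat -> nat -> R.

Definition psmul (R : nzRingType) (F G : pseries R) : pseries R :=
  fun i j => \sum_(k < i.+1) \sum_(l < j.+1) F k l * G (i - k)%N (j - l)%N.

Definition mon2 (i j : nat) : 'X_{1..2} :=
  [multinom (if val k == 0%N then i else j) | k < 2].

Definition ps_of (p : Sq) : pseries S := fun i j => p@_(mon2 i j).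

Definition in_Iq (F : pseries S) : Prop :=
  exists g : 'I_5 -> pseries S,
    forall i j, F i j = \sum_(k < 5) psmul (g k) (ps_of (gens k)) i j.

(* Main.v *)
Require Import Defs.
From mathcomp Require Import all_boot all_algebra fraction.
From mathcomp Require Import mpoly.

Set Implicit Arguments.
Unset Strict Implicit.
Unset Printing Implicit Defensive.
Import GRing.Theory.
Local Open Scope ring_scope.

Lemma mon2_0 i j : (mon2 i j == 0%MM) = (i == 0%N) && (j == 0%N).
Proof.
apply/eqP/andP.
- move/mnmP=> h; have := h 0; have := h 1; rewrite !mnmE /= => -> ->; done.
- by case=> /eqP -> /eqP ->; apply/mnmP => k; rewrite !mnmE; case: ifP.
Qed.

Lemma mon2_1 i j : (U_(1 : 'I_2)%MM == mon2 i j) = (i == 0%N) && (j == 1%N).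
Proof.
apply/eqP/andP.
- move/mnmP=> h; have := h 0; have := h 1; rewrite !mnmE /= => <- <-; done.
- by case=> /eqP -> /eqP ->; apply/mnmP => k; rewrite !mnmE;
     case: k => [[|[|]]] //.
Qed.

Definition cfq : S := e1X2 + Y12 - (e1T%:MP).

Lemma fqE : fq = cS cfq.
Proof. by rewrite /fq /cfq /cS /cK !raddfB !raddfD. Qed.

Lemma gens2E : gens 2 = cS cfq - q2 * cS cfq.
Proof. by rewrite /gens /= -/fq fqE mulrBl mul1r. Qed.

Lemma ps_fq i j : ps_of fq i j = cfq * ((i == 0%N) && (j == 0%N))%:R.
Proof. by rewrite /ps_of fqE /cS mcoeffC mon2_0. Qed.

Lemma ps_gens2 i j : ps_of (gens 2) i j =
  cfq * ((i == 0%N) && (j == 0%N))%:R - cfq * ((i == 0%N) && (j == 1%N))%:R.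
Proof.
rewrite /ps_of gens2E mcoeffB /cS mcoeffC mon2_0 [q2 * _]mulrC mcoeffCM.
congr (_ - _); congr (_ * _).
by rewrite /q2 mcoeffX mon2_1.
Qed.

Definition ev (p : Sq) : KT :=
  (p.@[fun k : 'I_2 => if val k == 0%N then (0 : S) else 1]).@[fun _ : 'I_5 => (0 : KT)].

Lemma evD : {morph ev : x y / x + y}.
Proof. by move=> x y; rewrite /ev !mevalD. Qed.
Lemma evM : {morph ev : x y / x * y}.
Proof. by move=> x y; rewrite /ev !mevalM. Qed.
Lemma ev0 : ev 0 = 0.
Proof. by rewrite /ev !meval0. Qed.

Lemma evB : {morph ev : x y / x - y}.
Proof. by move=> x y; rewrite /ev !mevalB. Qed.
Lemma evN : {morph ev : x / - x}.
Proof. by move=> x; rewrite /ev !mevalN. Qed.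
Lemma ev1 : ev 1 = 1.
Proof. by rewrite /ev !meval1. Qed.
Lemma evS (s : S) : ev (cS s) = s.@[fun=> 0].
Proof. by rewrite /ev /cS mevalC. Qed.
Lemma evK (k : KT) : ev (cK k) = k.
Proof. by rewrite /ev /cK !mevalC. Qed.
Lemma evq1 : ev q1 = 0.
Proof. by rewrite /ev /q1 mevalXU meval0. Qed.
Lemma evq2 : ev q2 = 1.
Proof. by rewrite /ev /q2 mevalXU meval1. Qed.
Lemma evX (i : 'I_5) : ('X_i : S).@[fun=> (0:KT)] = 0.
Proof. by rewrite mevalXU. Qed.

Lemma ev_gens i : ev (gens i) = 0.
Proof.
case: i => [[|[|[|[|[|n]]]]] Hi]; rewrite /gens /=;
rewrite ?evB ?evM ?evD ?evN ?evB ?evM ?evD ?evN ?ev1 ?evq1 ?evq2 ?evS ?evK /X11 /Y11 /e1X2 /e2X2 /Y12 ?evX;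
by rewrite ?mulr0 ?mul0r ?subrr ?addrN ?addr0 ?subr0 ?sub0r ?oppr0 ?mulr0 ?mul0r ?oppr0.
Qed.

Lemma e1T_neq0 : e1T != 0.
Proof.
apply/negP => /eqP H.
have : kt_val e1T = 0 by rewrite H.
rewrite /e1T /= -!tofracD => /eqP; rewrite tofrac_eq0 => /eqP H2.
have := congr1 (mcoeff U_(0 : 'I_3)) H2.
by rewrite !mcoeffD !mcoeffXU mcoeff0.
Qed.

Theorem mainTheorem11 : ~ in_Ipoly fq /\ in_Iq (ps_of fq).
Proof.
split.
- case=> g H.
  have := congr1 ev H.
  rewrite (big_morph ev evD ev0).
  rewrite big1; last first.
    by move=> i _; rewrite evM ev_gens mulr0.
  rewrite /fq !evB !evD !evS ?evK ?mevalC /e1X2 /Y12 !evX.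
  rewrite !add0r => /eqP; rewrite oppr_eq0; apply/negP; exact: e1T_neq0.
- exists (fun k => if val k == 2%N then (fun a b => if a == 0%N then 1 else 0) else (fun _ _ => 0)).
  move=> i j.
  rewrite (bigD1 (2 : 'I_5)) //= big1 ?addr0; last first.
    move=> k /negbTE Hk; rewrite /psmul.
    have -> : (val k == 2%N) = false by apply/negbTE; apply: contraFN Hk => /eqP Hk; apply/eqP/val_inj.
    by rewrite big1 // => a _; rewrite big1 // => b _; rewrite mul0r.
  rewrite /psmul big_ord_recl /=.
  rewrite [X in _ + X]big1 ?addr0; last first.
    by move=> a _; rewrite big1 // => b _; rewrite mul0r.
  under eq_bigr do rewrite mul1r subn0 ps_gens2.
  rewrite ps_fq.
  case: (i =P 0%N) => _ /=; last first.
    by rewrite mulr0 big1 // => b _; rewrite subrr.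
  elim: j => [|j IH]; first by rewrite big_ord1 /= mulr0 subr0.
  rewrite big_ord_recl /= subn0 /=.
  under eq_bigr do rewrite subSS.
  rewrite IH /=; case: j {IH} => [|j] /=; rewrite ?mulr0 ?mulr1 ?subr0 ?sub0r ?addNr //.
Qed.
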